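(* Let $x$ be a $\theta$-cyclic point such that $G_x$ has exactly $k$ critical cuts, and let $U$ be a critical cut of $G_x$. Then $G_x^U$ (with the point $x^U$) has at most $k-1$ critical cuts.
   Context: $\mathrm{SUBT}(K_n)=\{x\in[0,1]^{E_n}: x(\delta(\{i\}))=2\ \forall i,\ x(\delta(U))\ge2\ \forall\,\emptyset\ne U\subsetneq V_n\}$ where $K_n$ is the complete graph on $V_n=\{1,\ldots,n\}$ with edge set $E_n$ and $\delta(U)$ is the set of edges with exactly one endpoint in $U$. $G_x=(V_n,E_x)$, $E_x=\{e:x_e>0\}$. A $\theta$-cyclic point ($0<\theta\le\frac12$) is $x\in\mathrm{SUBT}(K_n)\cap\{0,\theta,1-\theta,1\}^{E_n}$ with $G_x$ of maximum degree at most 3 and every vertex incident to an edge of $x$-value 1. A cut $U$ of a graph with vertex set $V$ is proper if $|U|\ge2$ and $|V\setminus U|\ge2$. A critical cut is a proper cut $U$ with $|\delta(U)|=3$, exactly one edge of $\delta(U)$ of $x$-value 1, and the edges of $\delta(U)$ having pairwise distinct endpoints in $U$ and pairwise distinct endpoints outside $U$; a cut and its complement are regarded as the same cut. $G_x^U$ is obtained from $G_x$ by identifying all vertices of $V_n\setminus U$ into a single vertex and deleting loops; $x^U$ assigns each edge of $G_x^U$ its $x$-value. *)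

(* Defs.v *)
From HB Require Import structures.
From mathcomp Require Import all_boot all_order all_algebra.
Set Implicit Arguments. Unset Strict Implicit. Unset Printing Implicit Defensive.
Import Order.TTheory GRing.Theory Num.Theory.
Local Open Scope ring_scope.

(* A weighted graph on a finite vertex type T is given by a symmetric
   weight function w : T -> T -> R; its (simple) support graph has an edge
   {i,j} iff i <> j and w i j > 0. *)
Definition sedge (R : numDomainType) (T : finType) (w : T -> T -> R) (i j : T) : bool :=
  (i != j) && (0 < w i j).

Definition cut_edges (R : numDomainType) (T : finType) (w : T -> T -> R)
    (U : {set T}) : {set T * T} :=
  [set p : T * T | [&& p.1 \in U, p.2 \notin U & sedge w p.1 p.2]].

Definition proper_cut (T : finType) (U : {set T}) : bool :=
  (2 <= #|U|)%N && (2 <= #|~: U|)%N.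

Definition critical_cut (R : numDomainType) (T : finType) (w : T -> T -> R)
    (U : {set T}) : bool :=
  [&& proper_cut U,
      #|cut_edges w U| == 3%N,
      #|[set p in cut_edges w U | w p.1 p.2 == 1]| == 1%N,
      #|[set p.1 | p in cut_edges w U]| == 3%N &
      #|[set p.2 | p in cut_edges w U]| == 3%N].

(* A cut and its complement are the same cut; critical_cut is invariant under
   complement and U <> ~: U, so the number of critical cuts is half the number
   of vertex sets U that are critical. *)
Definition num_critical_cuts (R : numDomainType) (T : finType) (w : T -> T -> R) : nat :=
  (#|[set U : {set T} | critical_cut w U]| ./2)%N.

(* x in SUBT(K_n); vertices are 'I_n, x is a symmetric function on pairs,
   diagonal values are irrelevant. *)
Definition in_SUBT (R : realFieldType) (n : nat) (x : 'I_n -> 'I_n -> R) : Prop :=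
  [/\ forall i j, x i j = x j i,
      forall i j, i != j -> 0 <= x i j <= 1,
      forall i : 'I_n, \sum_(j | j != i) x i j = 2 &
      forall U : {set 'I_n}, U != set0 -> U != setT ->
        2 <= \sum_(i in U) \sum_(j in ~: U) x i j].

Definition theta_cyclic (R : realFieldType) (n : nat) (theta : R)
    (x : 'I_n -> 'I_n -> R) : Prop :=
  [/\ 0 < theta <= 2^-1,
      in_SUBT x,
      forall i j, i != j -> x i j \in [:: 0; theta; 1 - theta; 1],
      forall i, (#|[set j | sedge x i j]| <= 3)%N &
      forall i, exists j, j != i /\ x i j = 1].

(* G_x^U: vertex set U plus one new vertex (None) for the contracted V \ U;
   loops deleted.  The weight of an edge a--(V\U) is the sum of the x-values
   of the edges from a to V \ U (for a critical cut U there is at most one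
   such edge, so this is its x-value). *)
Definition contract_weight (R : realFieldType) (n : nat) (U : {set 'I_n})
    (x : 'I_n -> 'I_n -> R) :
    option {i : 'I_n | i \in U} -> option {i : 'I_n | i \in U} -> R :=
  fun a b =>
    match a, b with
    | Some a, Some b => x (val a) (val b)
    | Some a, None => \sum_(j in ~: U) x (val a) j
    | None, Some b => \sum_(j in ~: U) x j (val b)
    | None, None => 0
    end.
Arguments contract_weight {R n} U x _ _.

(* Main.v *)
Require Import Defs.
From HB Require Import structures.
From mathcomp Require Import all_boot all_order all_algebra.
Import Order.TTheory GRing.Theory Num.Theory.
Local Open Scope ring_scope.

Lemma crit_fst_inj (R : numDomainType) (T : finType) (w : T -> T -> R) (A : {set T}) :
  critical_cut w A -> {in cut_edges w A &, injective (fun p => p.1)}.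
Proof.
case/and5P => _ /eqP H3 _ /eqP H1 _; apply/imset_injP; by rewrite H1 H3.
Qed.

Arguments crit_fst_inj {R T w A}.

Lemma card_transfer (T1 T2 : finType) (g : T1 -> T2) (D : {set T1}) (E : {set T2})
  (P : pred T1) (Q : pred T2) :
  {in D &, injective g} -> E = g @: D -> {in D, forall p, Q (g p) = P p} ->
  #|[set q in E | Q q]| = #|[set p in D | P p]|.
Proof.
move=> inj -> HQ.
rewrite -(card_in_imset (f:=g)); last first.
  by move=> a b; rewrite !inE => /andP[? _] /andP[? _]; apply: inj.
apply: eq_card => q; rewrite !inE; apply/andP/imsetP.
- case=> /imsetP[p pD ->] Qp; exists p => //; by rewrite inE pD -HQ.
- case=> p; rewrite inE => /andP[pD Pp] ->; split; first exact: imset_f.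
  by rewrite HQ.
Qed.

Lemma sedge_sym (R : numDomainType) (T : finType) (w : T -> T -> R) :
  (forall i j, w i j = w j i) -> forall i j, sedge w i j = sedge w j i.
Proof. by move=> ws i j; rewrite /sedge eq_sym ws. Qed.

Lemma crit_compl (R : numDomainType) (T : finType) (w : T -> T -> R) (A : {set T}) :
  (forall i j, w i j = w j i) -> critical_cut w A -> critical_cut w (~: A).
Proof.
move=> ws Hc.
have swK : involutive (fun p : T * T => (p.2, p.1)) by case.
have CE : cut_edges w (~: A) = [set (p.2, p.1) | p in cut_edges w A].
  apply/setP => p; apply/idP/imsetP.
  - rewrite inE => /and3P[H1 H2 H3]; exists (p.2, p.1); last by case: p {H1 H2 H3}.
    rewrite inE /=; rewrite inE negbK in H2; rewrite inE in H1.
    by rewrite H2 H1 sedge_sym.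
  - case=> q; rewrite !inE => /and3P[H1 H2 H3] ->; rewrite /= H1 H2 /=.
    by rewrite sedge_sym.
move: Hc => /and5P[/andP[P1 P2] /eqP C3 /eqP C1 /eqP F3 /eqP S3].
apply/and5P; split.
- by rewrite /proper_cut setCK P1 P2.
- by rewrite CE card_imset ?C3 //; apply: (inv_inj swK).
- rewrite CE (@card_transfer _ _ (fun p : T * T => (p.2, p.1)) (cut_edges w A) _
    (fun p => w p.1 p.2 == 1) (fun p => w p.1 p.2 == 1)) //.
  + by rewrite C1.
  + by move=> a b _ _; apply: (inv_inj swK).
  + by move=> p _ /=; rewrite ws.
- rewrite CE -imset_comp (@eq_imset _ _ _ (fun p => p.2)) ?S3 //; by case.
- rewrite CE -imset_comp (@eq_imset _ _ _ (fun p => p.1)) ?F3 //; by case.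
Qed.

Lemma sum_pos_ex (R : realDomainType) (T : finType) (A : {pred T}) (F : T -> R) :
  0 < \sum_(j in A) F j -> exists2 j, j \in A & 0 < F j.
Proof.
case: (boolP [exists j in A, 0 < F j]) => [/exists_inP [j ? ?]|/exists_inP H].
  by exists j.
move=> Hs; suff : \sum_(j in A) F j <= 0 by move/(lt_le_trans Hs); rewrite ltxx.
apply: (big_ind (fun y => y <= 0)) => //; first by move=> a b Ha Hb; apply: ler_wnDl.
move=> j jA; rewrite leNgt; apply/negP => Hp; apply: H; by exists j.
Qed.

Arguments sum_pos_ex {R T A F}.

Section Main.
Variables (R : realFieldType) (n : nat) (x : 'I_n -> 'I_n -> R) (U : {set 'I_n}).
Hypothesis xsym : forall i j, x i j = x j i.
Hypothesis xnn : forall i j, i != j -> 0 <= x i j.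
Hypothesis Ucrit : critical_cut x U.

Notation sUset := {set option {i : 'I_n | i \in U}}.

Definition fU (i : 'I_n) : option {i : 'I_n | i \in U} := insub i.

Lemma fv (a : {i : 'I_n | i \in U}) : fU (val a) = Some a.
Proof. by rewrite /fU valK. Qed.

Lemma fout {i} : i \notin U -> fU i = None.
Proof. by move=> Hi; rewrite /fU insubF // (negbTE Hi). Qed.

Lemma fin {i} (Hi : i \in U) : fU i = Some (Sub i Hi).
Proof. by rewrite /fU insubT. Qed.

Lemma feq {i i'} : fU i = fU i' -> i \in U -> i = i'.
Proof.
move=> E Hi; case: (boolP (i' \in U)) => Hi'.
  by move: E; rewrite (fin Hi) (fin Hi') => -[].
by move: E; rewrite (fin Hi) (fout Hi').
Qed.

Lemma exists_out : exists j, j \notin U.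
Proof.
move: Ucrit => /and5P[/andP[_ P2] _ _ _ _].
have : (0 < #|~: U|)%N by apply: leq_trans P2.
by rewrite card_gt0 => /set0Pn[j]; rewrite inE => ?; exists j.
Qed.

Lemma fsurj (o : option {i : 'I_n | i \in U}) : exists i, fU i = o.
Proof.
case: o => [a|]; first by exists (val a); rewrite fv.
by have [j Hj] := exists_out; exists j; rewrite fout.
Qed.

Lemma edge_sum {a j} : a \in U -> j \notin U -> sedge x a j ->
  \sum_(j' in ~: U) x a j' = x a j.
Proof.
move=> Ha Hj Hs; rewrite (bigD1 j) ?inE //= big1 ?addr0 // => j' /andP [Hj' Hne].
rewrite inE in Hj'.
have aj' : a != j' by apply/eqP => E; move: Ha; rewrite E (negbTE Hj').
have := xnn _ _ aj'; rewrite le_eqVlt => /orP [/eqP <-|pos] //; exfalso.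
have E1 : (a, j) \in cut_edges x U by rewrite inE /= Ha Hj.
have E2 : (a, j') \in cut_edges x U by rewrite inE /= Ha Hj' /sedge aj' pos.
have := crit_fst_inj Ucrit _ _ E2 E1 erefl => -[]; by apply/eqP.
Qed.

Lemma cw_eq {i j} : fU i != fU j -> sedge x i j ->
  contract_weight U x (fU i) (fU j) = x i j.
Proof.
move=> Hne Hs.
case: (boolP (i \in U)) => Hi; case: (boolP (j \in U)) => Hj.
- by rewrite (fin Hi) (fin Hj) /= ?SubK.
- by rewrite (fin Hi) (fout Hj) /= ?SubK (edge_sum Hi Hj).
- rewrite (fout Hi) (fin Hj) /= ?SubK.
  under eq_bigr do rewrite xsym.
  by rewrite (edge_sum Hj Hi) // ?xsym // sedge_sym.
- by move: Hne; rewrite (fout Hi) (fout Hj) eqxx.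
Qed.

Definition gU (p : 'I_n * 'I_n) := (fU p.1, fU p.2).

Lemma g_cut (W : sUset) p : p \in cut_edges x (fU @^-1: W) ->
  gU p \in cut_edges (contract_weight U x) W /\
  contract_weight U x (gU p).1 (gU p).2 = x p.1 p.2.
Proof.
rewrite !inE => /and3P[H1 H2 H3].
have Hne : fU p.1 != fU p.2 by apply/eqP => E; move: H2; rewrite -E H1.
have E := cw_eq Hne H3; split => //.
rewrite /= H1 H2 /= /sedge Hne E /=; by case/andP: H3.
Qed.

Arguments g_cut {W p}.

Lemma g_inj (W : sUset) : {in cut_edges x (fU @^-1: W) &, injective gU}.
Proof.
case=> i j [i' j']; rewrite !inE /= => /and3P[Hi1 Hj1 Hs] /and3P[Hi1' Hj1' Hs'] [Ei Ej].
have CEU a b : a \in U -> b \notin U -> sedge x a b -> (a, b) \in cut_edges x U.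
  by move=> ? ? ?; rewrite inE /= ; apply/and3P.
case: (boolP (i \in U)) => Hi.
- have ii' := feq Ei Hi; subst i'.
  case: (boolP (j \in U)) => Hj; first by rewrite (feq Ej Hj).
  case: (boolP (j' \in U)) => Hj'.
    by move: Hj; rewrite -(feq (esym Ej) Hj') Hj'.
  have := crit_fst_inj Ucrit _ _ (CEU _ _ Hi Hj Hs) (CEU _ _ Hi Hj' Hs') erefl.
  by case=> ->.
- have Hi' : i' \notin U by apply/negP => Hi'; move: Hi; rewrite -(feq (esym Ei) Hi') Hi'.
  have Hj : j \in U.
    by case: (boolP (j \in U)) => // Hj; move: Hj1; rewrite (fout Hj) -(fout Hi) Hi1.
  have jj' := feq Ej Hj; subst j'.
  rewrite sedge_sym // in Hs; rewrite sedge_sym // in Hs'.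
  have := crit_fst_inj Ucrit _ _ (CEU _ _ Hj Hi Hs) (CEU _ _ Hj Hi' Hs') erefl.
  by case=> ->.
Qed.

Lemma g_surj (W : sUset) : cut_edges (contract_weight U x) W = gU @: cut_edges x (fU @^-1: W).
Proof.
apply/eqP; rewrite eqEsubset; apply/andP; split; last first.
  by apply/subsetP => q /imsetP[p Hp ->]; case: (g_cut Hp).
apply/subsetP => -[o1 o2]; rewrite inE /= => /and3P[H1 H2 /andP[Hne Hpos]].
case: o1 H1 Hne Hpos => [a|] H1; case: o2 H2 => [b|] H2 //= Hne Hpos.
- apply/imsetP; exists (val a, val b); last by rewrite /gU /= !fv.
  rewrite !inE /= !fv H1 H2 /sedge Hpos andbT /=.
  by apply: contra Hne => /eqP/val_inj ->.
- have [j Hj Hp] := sum_pos_ex Hpos; rewrite inE in Hj.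
  apply/imsetP; exists (val a, j); last by rewrite /gU /= fv fout.
  rewrite !inE /= fv fout // H1 H2 /sedge Hp andbT /=.
  by apply/eqP => E; move: Hj; rewrite -E (valP a).
- have [j Hj Hp] := sum_pos_ex Hpos; rewrite inE in Hj.
  apply/imsetP; exists (j, val b); last by rewrite /gU /= fv fout.
  rewrite !inE /= fv fout // H1 H2 /sedge Hp andbT /=.
  by apply/eqP => E; move: Hj; rewrite E (valP b).
Qed.

Lemma card_le_pre (W : {set option {i : 'I_n | i \in U}}) : (#|W| <= #|fU @^-1: W|)%N.
Proof.
apply: leq_trans (leq_imset_card fU _); apply: subset_leq_card.
apply/subsetP => o Ho; have [i Ei] := fsurj o; apply/imsetP; exists i => //.
by rewrite inE Ei.
Qed.

Lemma crit_pre (W : sUset) : critical_cut (contract_weight U x) W -> critical_cut x (fU @^-1: W).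
Proof.
move=> Hc; have Hc' := Hc.
move: Hc => /and5P[/andP[P1 P2] /eqP C3 /eqP C1 /eqP F3 /eqP S3].
have CE := g_surj W; have ginj := @g_inj W.
have card_CE : #|cut_edges x (fU @^-1: W)| = 3%N.
  by rewrite -(card_in_imset ginj) -CE.
have fi := crit_fst_inj Hc'.
apply/and5P; split.
- apply/andP; split; first exact: leq_trans P1 (card_le_pre _).
  by rewrite -preimsetC; apply: leq_trans P2 (card_le_pre _).
- by rewrite card_CE.
- rewrite -C1 (@card_transfer _ _ gU (cut_edges x (fU @^-1: W)) _ (fun p => x p.1 p.2 == 1)) //.
  by move=> p Hp; case: (g_cut Hp) => _ ->.
- rewrite -card_CE; apply/imset_injP => p q Hp Hq E.
  apply: ginj => //; apply: fi; try by case: (g_cut Hp); case: (g_cut Hq).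
  by rewrite /gU /= E.
- rewrite -card_CE; apply/imset_injP => p q Hp Hq E.
  apply: ginj => //.
  have si : {in cut_edges (contract_weight U x) W &, injective (fun p => p.2)}.
    by apply/imset_injP; rewrite S3 C3.
  apply: si; try by case: (g_cut Hp); case: (g_cut Hq).
  by rewrite /gU /= E.
Qed.

Lemma preim_U (W : sUset) : fU @^-1: W = U -> (#|~: W| <= 1)%N.
Proof.
move=> E; have [j Hj] := exists_out.
rewrite -(cards1 (@None {i : 'I_n | i \in U})); apply: subset_leq_card.
apply/subsetP => o; rewrite !inE; case: o => [a|] // Ha; exfalso.
have : val a \in fU @^-1: W by rewrite E (valP a).
by rewrite inE fv (negbTE Ha).
Qed.

Lemma F_inj : injective (fun W : sUset => fU @^-1: W).
Proof.
move=> W1 W2 E; apply/setP => o; have [i <-] := fsurj o.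
by move: E => /setP/(_ i); rewrite !inE.
Qed.

End Main.

Theorem mainTheorem12 (R : realFieldType) (n : nat) (theta : R)
    (x : 'I_n -> 'I_n -> R) (k : nat) (U : {set 'I_n}) :
  theta_cyclic theta x ->
  num_critical_cuts x = k ->
  critical_cut x U ->
  (num_critical_cuts (contract_weight U x) <= k - 1)%N.
Proof.
move=> [_ [xsym xb _ _] _ _ _] Hk Uc.
have xnn i j : i != j -> 0 <= x i j by move=> /xb /andP[].
set C := [set A | critical_cut x A].
set C' := [set W | critical_cut (contract_weight U x) W].
have UC : U \in C by rewrite inE.
have UC' : ~: U \in C :\ U.
  rewrite !inE crit_compl // andbT; apply/eqP => E.
  move: Uc => /and5P[/andP[P1 _] _ _ _ _].
  have : (0 < #|U|)%N by apply: leq_trans P1.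
  rewrite card_gt0 => /set0Pn[u Hu]; move: (Hu); rewrite -{1}E inE Hu //.
have FC : [set (@fU n U) @^-1: W | W : {set option {i : 'I_n | i \in U}} in C'] \subset C :\ U :\ ~: U.
  apply/subsetP => A /imsetP[W]; rewrite inE => HW ->.
  have Hp : critical_cut x ((@fU n U) @^-1: W) by apply: crit_pre.
  move: (HW) => /and5P[/andP[P1 P2] _ _ _ _].
  rewrite !inE Hp andbT; apply/andP; split; apply/eqP => E.
  - have : (@fU n U) @^-1: (~: W) = U by rewrite preimsetC E setCK.
    move/(@preim_U _ _ _ _ Uc _) => H; move: P1; rewrite -{1}(setCK W).
    by move/leq_trans/(_ H).
  - by move: P2 => /leq_trans/(_ (@preim_U _ _ _ _ Uc _ E)).
have Hle : (#|C'| <= #|C :\ U :\ ~: U|)%N.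
  by rewrite -(card_imset _ (@F_inj _ _ _ _ Uc)); apply: subset_leq_card.
rewrite -Hk /num_critical_cuts -/C -/C'.
rewrite (cardsD1 U C) UC (cardsD1 (~: U) (C :\ U)) UC'.
have -> : ((true + (true + #|C :\ U :\ ~: U|))./2 - 1 = #|C :\ U :\ ~: U|./2)%N by rewrite subn1.
exact: half_leq.
Qed.
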